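(* Let $R=\mathbb{Z}[a]$, let $\Gamma$ be the ring defined below, and let \[ \Psi = Q_0Q_0 +a\,Q_0Q_1 -2\,Q_1Q_1 +a^2\,Q_0Q_2 -2a\,Q_1Q_2 +4\,Q_2Q_2\in\Gamma. \] Then $\Psi$ lies in the center of $\Gamma$.
   Context: $R=\mathbb{Z}[a]$ is a polynomial ring. $\Gamma$ is the associative ring equipped with a ring homomorphism $\eta\colon R\to\Gamma$, generated over $R$ by $Q_0,Q_1,Q_2$ subject to: (i) commutation relations: the $Q_i$ commute with elements of $\mathbb{Z}\subset R$, and $Q_0\,a = a^2Q_0-2aQ_1+6Q_2$, $Q_1\,a=3Q_0+aQ_2$, $Q_2\,a=-aQ_0+3Q_1$; (ii) adem relations: $Q_1Q_0=2Q_2Q_1-2Q_0Q_2$ and $Q_2Q_0=Q_0Q_1+aQ_0Q_2-2Q_1Q_2$. *)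

(* Defs.v *)
From HB Require Import structures.
From mathcomp Require Import all_boot all_order all_algebra.
Set Implicit Arguments. Unset Strict Implicit. Unset Printing Implicit Defensive.
Import GRing.Theory.
Local Open Scope ring_scope.

(* R = Z[a] is {poly int}, with a = 'X.  Gamma is characterised by
   its universal property: a "Gamma-structure" on a ring S is a ring morphism
   eta : R -> S together with Q0 Q1 Q2 : S satisfying the relations.
   (Commutation of Q_i with the integers is automatic in any ring.) *)

Definition gamma_rels (S : pzRingType) (eta : {rmorphism {poly int} -> S})
  (Q0 Q1 Q2 : S) : Prop :=
  let a := eta 'X in
  [/\ Q0 * a = a ^+ 2 * Q0 - 2%:R * a * Q1 + 6%:R * Q2,
      Q1 * a = 3%:R * Q0 + a * Q2,
      Q2 * a = - (a * Q0) + 3%:R * Q1,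
      Q1 * Q0 = 2%:R * (Q2 * Q1) - 2%:R * (Q0 * Q2)
    & Q2 * Q0 = Q0 * Q1 + a * (Q0 * Q2) - 2%:R * (Q1 * Q2)].

(* The subring of S generated by eta(R) and Q0, Q1, Q2 (the image of Gamma). *)
Inductive gamma_gen (S : pzRingType) (eta : {rmorphism {poly int} -> S})
  (Q0 Q1 Q2 : S) : S -> Prop :=
  | gg_eta r : gamma_gen eta Q0 Q1 Q2 (eta r)
  | gg_Q0 : gamma_gen eta Q0 Q1 Q2 Q0
  | gg_Q1 : gamma_gen eta Q0 Q1 Q2 Q1
  | gg_Q2 : gamma_gen eta Q0 Q1 Q2 Q2
  | gg_add x y : gamma_gen eta Q0 Q1 Q2 x -> gamma_gen eta Q0 Q1 Q2 y ->
                 gamma_gen eta Q0 Q1 Q2 (x + y)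
  | gg_opp x : gamma_gen eta Q0 Q1 Q2 x -> gamma_gen eta Q0 Q1 Q2 (- x)
  | gg_mul x y : gamma_gen eta Q0 Q1 Q2 x -> gamma_gen eta Q0 Q1 Q2 y ->
                 gamma_gen eta Q0 Q1 Q2 (x * y).

Definition Psi (S : pzRingType) (eta : {rmorphism {poly int} -> S})
  (Q0 Q1 Q2 : S) : S :=
  let a := eta 'X in
  Q0 * Q0 + a * (Q0 * Q1) - 2%:R * (Q1 * Q1) + a ^+ 2 * (Q0 * Q2)
  - 2%:R * a * (Q1 * Q2) + 4%:R * (Q2 * Q2).

(* Main.v *)
Require Import Defs.
From HB Require Import structures.
From mathcomp Require Import all_boot all_order all_algebra.
Import GRing.Theory.
Local Open Scope ring_scope.

Definition npoly := seq (int * seq nat).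

Definition rule (x y : nat) : option npoly :=
  match x, y with
  | 1, 0 => Some [:: (Posz 1, [:: 0; 0; 1]%N); (Negz 1, [:: 0; 2]%N); (Posz 6, [:: 3%N])]
  | 2, 0 => Some [:: (Posz 3, [:: 1%N]); (Posz 1, [:: 0; 3]%N)]
  | 3, 0 => Some [:: (Negz 0, [:: 0; 1]%N); (Posz 3, [:: 2%N])]
  | 2, 1 => Some [:: (Posz 2, [:: 3; 2]%N); (Negz 1, [:: 1; 3]%N)]
  | 3, 1 => Some [:: (Posz 1, [:: 1; 2]%N); (Posz 1, [:: 0; 1; 3]%N); (Negz 1, [:: 2; 3]%N)]
  | _, _ => None
  end%N.

Fixpoint rw (w : seq nat) : option npoly :=
  match w with
  | x :: ((y :: t) as w') =>
      match rule x y with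
      | Some r => Some (map (fun p => (p.1, p.2 ++ t)) r)
      | None => omap (map (fun p => (p.1, x :: p.2))) (rw w')
      end
  | _ => None
  end.

Definition step (p : npoly) : npoly :=
  flatten (map (fun cw => match rw cw.2 with
                          | Some q => map (fun d => (cw.1 * d.1, d.2)) q
                          | None => [:: cw] end) p).

Fixpoint ins (cw : int * seq nat) (p : npoly) : npoly :=
  match p with
  | [::] => [:: cw]
  | dv :: r => if cw.2 == dv.2 then (cw.1 + dv.1, dv.2) :: r else dv :: ins cw r
  end.

Definition collect (p : npoly) : npoly := foldr ins [::] p.

Definition psiP : npoly :=
  [:: (Posz 1, [:: 1; 1]%N); (Posz 1, [:: 0; 1; 2]%N); (Negz 1, [:: 2; 2]%N);
      (Posz 1, [:: 0; 0; 1; 3]%N); (Negz 1, [:: 0; 2; 3]%N); (Posz 4, [:: 3; 3]%N)].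

Definition Dg (g : nat) : npoly :=
  map (fun p => (p.1, p.2 ++ [:: g])) psiP ++ map (fun p => (- p.1, g :: p.2)) psiP.

Definition checkg g := all (fun p => p.1 == 0) (collect (iter 6 step (Dg g))).

Lemma checks : [&& checkg 0, checkg 1, checkg 2 & checkg 3]%N.
Proof. vm_compute. reflexivity. Qed.

Section Refl.
Variables (S : pzRingType) (eta : {rmorphism {poly int} -> S}) (Q0 Q1 Q2 : S).
Hypothesis H : gamma_rels eta Q0 Q1 Q2.

Definition atom (l : nat) : S :=
  match l with 0 => eta 'X | 1 => Q0 | 2 => Q1 | _ => Q2 end%N.
Definition evl (w : seq nat) : S := foldr (fun l acc => atom l * acc) 1 w.
Definition evp (p : npoly) : S := foldr (fun cw acc => cw.1%:~R * evl cw.2 + acc) 0 p.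

Lemma evl_cat v t : evl (v ++ t) = evl v * evl t.
Proof. by elim: v => [|x v IH] /=; rewrite ?mul1r // IH mulrA. Qed.

Lemma evp_cat p q : evp (p ++ q) = evp p + evp q.
Proof. by elim: p => [|x p IH] /=; rewrite ?add0r // IH addrA. Qed.

Lemma evp_app p t : evp (map (fun p => (p.1, p.2 ++ t)) p) = evp p * evl t.
Proof.
elim: p => [|x p IH] /=; first by rewrite mul0r.
by rewrite IH evl_cat mulrDl !mulrA.
Qed.

Lemma evp_pre p x : evp (map (fun p => (p.1, x :: p.2)) p) = atom x * evp p.
Proof.
elim: p => [|y p IH] /=; first by rewrite mulr0.
by rewrite IH mulrDr !mulrA commr_int.
Qed.

Lemma evp_scale c p : evp (map (fun d => (c * d.1, d.2)) p) = c%:~R * evp p.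
Proof.
elim: p => [|y p IH] /=; first by rewrite mulr0.
by rewrite IH mulrDr intrM !mulrA.
Qed.

Lemma evp_neg p : evp (map (fun p => (- p.1, p.2)) p) = - evp p.
Proof.
elim: p => [|y p IH] /=; first by rewrite oppr0.
by rewrite IH opprD mulrNz mulNr.
Qed.

Lemma rule_ok x y r : rule x y = Some r -> evp r = atom x * atom y.
Proof.
case: H => h1 h2 h3 h4 h5.
case: x => [|[|[|[|x]]]] //; case: y => [|[|y]] //= [<-] /=;
  rewrite ?mulr1 ?addr0 ?mul1r.
- by rewrite h1 expr2 -!mulrA !NegzE !mulNr -!pmulrn !mulrA -!addrA.
- by rewrite h2 -pmulrn.
- by rewrite h4 -!pmulrn !NegzE !mulNr.
- by rewrite h3 -!pmulrn !NegzE mulN1r.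
- by rewrite h5 NegzE mulNr -!addrA !mulrA.
Qed.

Lemma rw_ok w q : rw w = Some q -> evp q = evl w.
Proof.
elim: w q => [|x [|y t] IH] q //.
have -> : rw [:: x, y & t] = match rule x y with
      | Some r => Some (map (fun p => (p.1, p.2 ++ t)) r)
      | None => omap (map (fun p => (p.1, x :: p.2))) (rw (y :: t))
      end by [].
case E: (rule x y) => [r|].
  by case=> <-; rewrite evp_app (rule_ok _ _ _ E) /= mulrA.
case E2: (rw (y :: t)) => [q'|] //= [<-].
by rewrite evp_pre (IH _ E2).
Qed.

Lemma step_ok p : evp (step p) = evp p.
Proof.
elim: p => [|[c w] p IH] //=.
rewrite /step /= evp_cat -/(step p) IH.
case E: (rw w) => [q|] /=; last by rewrite addr0.
by rewrite evp_scale (rw_ok _ _ E).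
Qed.

Lemma iter_ok n p : evp (iter n step p) = evp p.
Proof. by elim: n => [|n IH] //=; rewrite step_ok. Qed.

Lemma ins_ok cw p : evp (ins cw p) = cw.1%:~R * evl cw.2 + evp p.
Proof.
elim: p => [|dv p IH] /=; first by [].
case: eqP => [->|_] /=.
  by rewrite intrD mulrDl addrA.
by rewrite IH addrCA.
Qed.

Lemma collect_ok p : evp (collect p) = evp p.
Proof. by elim: p => [|x p IH] //=; rewrite ins_ok IH. Qed.

Lemma zero_ok p : all (fun p => p.1 == 0) p -> evp p = 0.
Proof.
elim: p => [|x p IH] //= /andP[/eqP -> /IH ->].
by rewrite mul0r addr0.
Qed.

Lemma Psi_evp : Psi eta Q0 Q1 Q2 = evp psiP.
Proof.
rewrite /Psi /evp /= !mulr1 !mul1r addr0 !NegzE !mulNr.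
by rewrite expr2 -!mulrA -!addrA !mulrA.
Qed.

Lemma negpre_ok g p : evp (map (fun p => (- p.1, g :: p.2)) p) = - (atom g * evp p).
Proof.
elim: p => [|y p IH] /=; first by rewrite mulr0 oppr0.
rewrite IH mulrDr opprD; congr (_ + _).
by rewrite mulrNz mulNr !mulrA commr_int.
Qed.

Lemma Dg_ok g : evp (Dg g) = evp psiP * atom g - atom g * evp psiP.
Proof.
rewrite /Dg evp_cat negpre_ok -[[:: g]]/([:: g] ++ [::]).
by rewrite (evp_app psiP [:: g]) [evl _]/= mulr1.
Qed.

Lemma gen_comm g : (g <= 3)%N -> Psi eta Q0 Q1 Q2 * atom g = atom g * Psi eta Q0 Q1 Q2.
Proof.
move=> hg; apply/eqP; rewrite -subr_eq0 Psi_evp -Dg_ok -(iter_ok 6) -collect_ok.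
apply/eqP/zero_ok.
move: checks; case: g hg => [|[|[|[|]]]] //= _; by case/and4P.
Qed.

End Refl.

Theorem mainTheorem2 (S : pzRingType) (eta : {rmorphism {poly int} -> S})
  (Q0 Q1 Q2 : S) :
  gamma_rels eta Q0 Q1 Q2 ->
  forall x : S, gamma_gen eta Q0 Q1 Q2 x ->
    Psi eta Q0 Q1 Q2 * x = x * Psi eta Q0 Q1 Q2.
Proof.
move=> H x.
have h0 := @gen_comm S eta Q0 Q1 Q2 H 0%N isT.
have h1 := @gen_comm S eta Q0 Q1 Q2 H 1%N isT.
have h2 := @gen_comm S eta Q0 Q1 Q2 H 2%N isT.
have h3 := @gen_comm S eta Q0 Q1 Q2 H 3%N isT.
rewrite /atom in h0 h1 h2 h3.
move: (Psi eta Q0 Q1 Q2) h0 h1 h2 h3 => P h0 h1 h2 h3.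
elim => {x}.
- move=> r; elim/poly_ind: r => [|p c IH].
    by rewrite rmorph0 mulr0 mul0r.
  rewrite rmorphD rmorphM mulrDr mulrDl; congr (_ + _).
    by rewrite mulrA IH -mulrA h0 mulrA.
  by rewrite -[c]intz polyCMz polyC1 rmorph_int commr_int.
- exact: h1.
- exact: h2.
- exact: h3.
- by move=> x y _ hx _ hy; rewrite mulrDr mulrDl hx hy.
- by move=> x _ hx; rewrite mulrN mulNr hx.
- by move=> x y _ hx _ hy; rewrite mulrA hx -mulrA hy mulrA.
Qed.
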